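(* Let $K=2$ and suppose that for every horizon $T$ (a multiple of $100$) a valid pair $(\eta,\gamma)=(\eta_T,\gamma_T)$ in the non-trivial regime is chosen. Then there exists $T_0$ such that for all $T\ge T_0$, WSU-UX run on the two-phase loss sequence satisfies $$\Pr\bigl(\pi_{T_1+T_2+1,1}\ge\tfrac14\bigr)\ge 1-\frac{2}{T^2},\qquad T_2=\tfrac{2}{10}T.$$
   Context: WSU-UX. Fix integers $K\ge 2$ and $T\ge 1$ and hyperparameters $\eta,\gamma$. The pair $(\eta,\gamma)$ is called valid if $\eta,\gamma\in(0,1/2)$ and $\eta K/\gamma\le 1/2$. Given a fixed loss sequence $\ell_t\in[0,1]^K$, WSU-UX sets $\pi_{1,i}=1/K$ and in each round $t$: forms $\tilde\pi_{t,i}=(1-\gamma)\pi_{t,i}+\gamma/K$; draws $I_t$ with $\Pr(I_t=i\mid\mathcal F_{t-1})=\tilde\pi_{t,i}$; sets $\hat\ell_{t,i}=\ell_{t,i}\mathbf 1[I_t=i]/\tilde\pi_{t,i}$; and updates $\pi_{t+1,i}=\pi_{t,i}\bigl(1-\eta(\hat\ell_{t,i}-\sum_{j}\pi_{t,j}\hat\ell_{t,j})\bigr)$; $\mathcal F_t$ is the history generated by $I_1,\dots,I_t$. Non-trivial regime: $\eta\ge T^{-2/3}$ and $\gamma\le T^{-1/3}$. Two-phase loss sequence ($K=2$, $T$ a multiple of $100$, $T_1=T/100$): $\ell_{t,1}=1,\ell_{t,2}=0$ for $1\le t\le T_1$ and $\ell_{t,1}=0,\ell_{t,2}=1$ for $T_1<t\le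 T$. *)

(* Defs.v *)
From Stdlib Require Import Reals Lra Lia List Arith.
Import ListNotations.
Open Scope R_scope.

(* Arms are indexed 0..K-1 (paper's arm i is index i-1); rounds t are 1-based. *)

Definition fsum (K : nat) (g : nat -> R) : R :=
  fold_right Rplus 0 (map g (seq 0 K)).

Definition valid (K : nat) (eta gamma : R) : Prop :=
  0 < eta < 1/2 /\ 0 < gamma < 1/2 /\ eta * INR K / gamma <= 1/2.

Definition nontrivial (T : nat) (eta gamma : R) : Prop :=
  eta >= Rpower (INR T) (-(2/3)) /\ gamma <= Rpower (INR T) (-(1/3)).

Definition tilde_pi (K : nat) (gamma : R) (p : nat -> R) (i : nat) : R :=
  (1 - gamma) * p i + gamma / INR K.

Definition wsu_update (K : nat) (eta gamma : R) (loss : nat -> nat -> R)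
  (t : nat) (p : nat -> R) (I : nat) : nat -> R :=
  let lhat := fun i => if Nat.eqb i I then loss t i / tilde_pi K gamma p i else 0 in
  let avg := fsum K (fun j => p j * lhat j) in
  fun i => p i * (1 - eta * (lhat i - avg)).

(* Expectation of f(pi_{t+n}) given pi_t = p, when the rounds t, ..., t+n-1
   are played: I_s is drawn from tilde pi_s independently of the past given
   the history, exactly as in the algorithm. *)
Fixpoint wsu_expect (K : nat) (eta gamma : R) (loss : nat -> nat -> R)
  (n t : nat) (p : nat -> R) (f : (nat -> R) -> R) : R :=
  match n with
  | O => f p
  | S n' => fsum K (fun i => tilde_pi K gamma p i *
              wsu_expect K eta gamma loss n' (S t) (wsu_update K eta gamma loss t p i) f)
  end.

Definition uniform (K : nat) : nat -> R := fun _ => 1 / INR K.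

Definition indic (P : (nat -> R) -> Prop)
  (dec : forall p, {P p} + {~ P p}) : (nat -> R) -> R :=
  fun p => if dec p then 1 else 0.

(* Probability that pi_{n+1} satisfies P, starting from pi_1 = uniform *)
Definition wsu_prob (K : nat) (eta gamma : R) (loss : nat -> nat -> R) (n : nat)
  (P : (nat -> R) -> Prop) (dec : forall p, {P p} + {~ P p}) : R :=
  wsu_expect K eta gamma loss n 1 (uniform K) (indic P dec).

(* Two-phase loss sequence for K = 2, T1 = T/100 *)
Definition two_phase (T : nat) (t i : nat) : R :=
  if Nat.leb t (T / 100) then (if Nat.eqb i 0 then 1 else 0)
  else (if Nat.eqb i 0 then 0 else 1).

(* event pi_{.,1} >= 1/4 (arm 1 = index 0) *)
Definition arm1_quarter (p : nat -> R) : Prop := 1/4 <= p 0%nat.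
Definition arm1_quarter_dec (p : nat -> R) : {arm1_quarter p} + {~ arm1_quarter p} :=
  Rle_dec (1/4) (p 0%nat).

(* Main.v *)
Require Import Defs.
From Stdlib Require Import Reals Lra Lia Arith.
Open Scope R_scope.
Lemma fsum2 g : fsum 2 g = g 0%nat + g 1%nat.
Proof. unfold fsum; simpl; ring. Qed.
Section U.
Variables (eta gamma : R) (loss : nat -> nat -> R) (t : nat) (p : nat -> R).
Let a := tilde_pi 2 gamma p 0. Let b := tilde_pi 2 gamma p 1.
Lemma upd00 : wsu_update 2 eta gamma loss t p 0 0%nat = p 0%nat * (1 - eta * (loss t 0%nat / a - p 0%nat * (loss t 0%nat / a))).
Proof. unfold wsu_update; rewrite fsum2; cbn -[Rdiv Rmult Rminus Rplus tilde_pi]. unfold a; ring. Qed.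
Lemma upd01 : wsu_update 2 eta gamma loss t p 0 1%nat = p 1%nat * (1 - eta * (0 - p 0%nat * (loss t 0%nat / a))).
Proof. unfold wsu_update; rewrite fsum2; cbn -[Rdiv Rmult Rminus Rplus tilde_pi]. unfold a; ring. Qed.
Lemma upd10 : wsu_update 2 eta gamma loss t p 1 0%nat = p 0%nat * (1 - eta * (0 - p 1%nat * (loss t 1%nat / b))).
Proof. unfold wsu_update; rewrite fsum2; cbn -[Rdiv Rmult Rminus Rplus tilde_pi]. unfold b; ring. Qed.
Lemma upd11 : wsu_update 2 eta gamma loss t p 1 1%nat = p 1%nat * (1 - eta * (loss t 1%nat / b - p 1%nat * (loss t 1%nat / b))).
Proof. unfold wsu_update; rewrite fsum2; cbn -[Rdiv Rmult Rminus Rplus tilde_pi]. unfold b; ring. Qed.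
End U.
Lemma core1 p0 p1 a b eta : 0<p0 -> 0<p1 -> p0+p1=1 -> 0<a -> 0<b -> a+b=1 -> 2*eta*p1 <= a -> 0<eta ->
  0 < p0*(1 - eta*(1/a - p0*(1/a))) /\ 0 < p1*(1 - eta*(0 - p0*(1/a))) /\
  p0*(1 - eta*(1/a - p0*(1/a))) + p1*(1 - eta*(0 - p0*(1/a))) = 1 /\
  a * (p1*(1 - eta*(0 - p0*(1/a))) / (p0*(1 - eta*(1/a - p0*(1/a))))) + b * (p1/p0) <= (1+2*eta)*(p1/p0).
Proof.
  intros h0 h1 hs ha hb hab hk he.
  replace (p0*(1 - eta*(1/a - p0*(1/a)))) with (p0*(a - eta*p1)/a) by (replace p1 with (1-p0) by lra; field; lra).
  replace (p1*(1 - eta*(0 - p0*(1/a)))) with (p1*(a + eta*p0)/a) by (field; lra).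
  assert (hd : 0 < a - eta*p1) by nra.
  repeat split.
  - apply Rdiv_lt_0_compat; nra.
  - apply Rdiv_lt_0_compat; nra.
  - field_simplify; [|lra]. replace p1 with (1-p0) by lra. field; lra.
  - replace (a * (p1 * (a + eta * p0) / a / (p0 * (a - eta * p1) / a))) with ((p1/p0) * (a*(a+eta*p0)/(a-eta*p1))) by (field; lra).
    assert (X : a*(a+eta*p0)/(a-eta*p1) <= a + 2*eta).
    { apply (Rmult_le_reg_r (a - eta*p1)); [lra|]. unfold Rdiv. rewrite Rmult_assoc, Rinv_l by lra. nra. }
    assert (0 < p1/p0) by (apply Rdiv_lt_0_compat; lra).
    nra.
Qed.
Lemma core2 p0 p1 a b eta : 0<p0 -> 0<p1 -> p0+p1=1 -> 0<a -> 0<b -> a+b=1 -> 2*eta*p0 <= b -> eta*p1 <= b -> 0<eta ->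
  0 < p0*(1 - eta*(0 - p1*(1/b))) /\ 0 < p1*(1 - eta*(1/b - p1*(1/b))) /\
  p0*(1 - eta*(0 - p1*(1/b))) + p1*(1 - eta*(1/b - p1*(1/b))) = 1 /\
  a * (p1/p0) + b * (p1*(1 - eta*(1/b - p1*(1/b))) / (p0*(1 - eta*(0 - p1*(1/b))))) <= (1-eta/2)*(p1/p0).
Proof.
  intros h0 h1 hs ha hb hab hk hk2 he.
  replace (p1*(1 - eta*(1/b - p1*(1/b)))) with (p1*(b - eta*p0)/b) by (replace p0 with (1-p1) by lra; field; lra).
  replace (p0*(1 - eta*(0 - p1*(1/b)))) with (p0*(b + eta*p1)/b) by (field; lra).
  assert (hd : 0 < b - eta*p0) by nra.
  repeat split.
  - apply Rdiv_lt_0_compat; nra.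
  - apply Rdiv_lt_0_compat; nra.
  - field_simplify; [|lra]. replace p1 with (1-p0) by lra. field; lra.
  - replace (b * (p1 * (b - eta * p0) / b / (p0 * (b + eta * p1) / b))) with ((p1/p0) * (b*(b-eta*p0)/(b+eta*p1))) by (field; nra).
    assert (X : b*(b-eta*p0)/(b+eta*p1) <= b - eta/2).
    { apply (Rmult_le_reg_r (b + eta*p1)); [nra|]. unfold Rdiv. rewrite Rmult_assoc, Rinv_l by nra. nra. }
    assert (0 < p1/p0) by (apply Rdiv_lt_0_compat; lra).
    nra.
Qed.

Definition SS (p : nat -> R) : Prop := 0 < p 0%nat /\ 0 < p 1%nat /\ p 0%nat + p 1%nat = 1.
Definition rr (p : nat -> R) : R := p 1%nat / p 0%nat.

Lemma hyp_facts eta gamma p : 0 < eta < 1/2 -> 0 < gamma < 1/2 -> eta * INR 2 / gamma <= 1/2 -> SS p ->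
  let a := tilde_pi 2 gamma p 0 in let b := tilde_pi 2 gamma p 1 in
  0 < a /\ 0 < b /\ a + b = 1 /\ 2*eta*p 0%nat <= b /\ 2*eta*p 1%nat <= a /\ eta * p 1%nat <= b.
Proof.
  intros He Hg Heg [h0 [h1 hs]] a b.
  assert (ea : a = (1 - gamma) * p 0%nat + gamma / 2) by (unfold a, tilde_pi; simpl INR; field).
  assert (eb : b = (1 - gamma) * p 1%nat + gamma / 2) by (unfold b, tilde_pi; simpl INR; field).
  clearbody a b. simpl INR in Heg.
  assert (he2 : eta <= gamma / 4).
  { assert (eta * (1+1) = (eta * (1+1) / gamma) * gamma) by (field; lra). nra. }
  assert (0 <= (1-gamma)*p 0%nat) by (apply Rmult_le_pos; lra).
  assert (0 <= (1-gamma)*p 1%nat) by (apply Rmult_le_pos; lra).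
  assert (eta*p 1%nat <= eta) by (assert (eta*p 1%nat <= eta*1) by (apply Rmult_le_compat_l; lra); lra).
  assert (eta*p 0%nat <= eta) by (assert (eta*p 0%nat <= eta*1) by (apply Rmult_le_compat_l; lra); lra).
  repeat split; try lra. nra.
Qed.

Lemma stepA eta gamma loss t p : 0 < eta < 1/2 -> 0 < gamma < 1/2 -> eta * INR 2 / gamma <= 1/2 -> SS p ->
  loss t 0%nat = 1 -> loss t 1%nat = 0 ->
  SS (wsu_update 2 eta gamma loss t p 0) /\ SS (wsu_update 2 eta gamma loss t p 1) /\
  0 <= tilde_pi 2 gamma p 0 /\ 0 <= tilde_pi 2 gamma p 1 /\
  tilde_pi 2 gamma p 0 * rr (wsu_update 2 eta gamma loss t p 0)
  + tilde_pi 2 gamma p 1 * rr (wsu_update 2 eta gamma loss t p 1) <= (1 + 2*eta) * rr p.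
Proof.
  intros He Hg Heg Hp l0 l1.
  destruct (hyp_facts eta gamma p He Hg Heg Hp) as (ha & hb & hab & k1 & k2 & k3).
  destruct Hp as [h0 [h1 hs]].
  unfold SS, rr. rewrite !upd00, !upd01, !upd10, !upd11, l0, l1.
  replace (0 / tilde_pi 2 gamma p 1) with 0 by (field; lra).
  replace (p 0%nat * (1 - eta * (0 - p 1%nat * 0))) with (p 0%nat) by ring.
  replace (p 1%nat * (1 - eta * (0 - p 1%nat * 0))) with (p 1%nat) by ring.
  destruct (core1 (p 0%nat) (p 1%nat) _ _ eta h0 h1 hs ha hb hab k2 ltac:(lra)) as (c1 & c2 & c3 & c4).
  repeat split; lra.
Qed.

Lemma stepB eta gamma loss t p : 0 < eta < 1/2 -> 0 < gamma < 1/2 -> eta * INR 2 / gamma <= 1/2 -> SS p ->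
  loss t 0%nat = 0 -> loss t 1%nat = 1 ->
  SS (wsu_update 2 eta gamma loss t p 0) /\ SS (wsu_update 2 eta gamma loss t p 1) /\
  0 <= tilde_pi 2 gamma p 0 /\ 0 <= tilde_pi 2 gamma p 1 /\
  tilde_pi 2 gamma p 0 * rr (wsu_update 2 eta gamma loss t p 0)
  + tilde_pi 2 gamma p 1 * rr (wsu_update 2 eta gamma loss t p 1) <= (1 - eta/2) * rr p.
Proof.
  intros He Hg Heg Hp l0 l1.
  destruct (hyp_facts eta gamma p He Hg Heg Hp) as (ha & hb & hab & k1 & k2 & k3).
  destruct Hp as [h0 [h1 hs]].
  unfold SS, rr. rewrite !upd00, !upd01, !upd10, !upd11, l0, l1.
  replace (0 / tilde_pi 2 gamma p 0) with 0 by (field; lra).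
  replace (p 0%nat * (1 - eta * (0 - p 0%nat * 0))) with (p 0%nat) by ring.
  replace (p 1%nat * (1 - eta * (0 - p 0%nat * 0))) with (p 1%nat) by ring.
  destruct (core2 (p 0%nat) (p 1%nat) _ _ eta h0 h1 hs ha hb hab k1 k3 ltac:(lra)) as (c1 & c2 & c3 & c4).
  repeat split; lra.
Qed.
Lemma exp_pow x n : exp x ^ n = exp (INR n * x).
Proof. induction n. simpl. rewrite Rmult_0_l, exp_0; auto.
  rewrite S_INR. change (exp x ^ S n) with (exp x * exp x ^ n). rewrite IHn, <- exp_plus. f_equal; ring. Qed.

Lemma exp_le x y : x <= y -> exp x <= exp y.
Proof. intros [h|h]. left; apply exp_increasing; auto. subst; lra. Qed.

Lemma num u : 10^13 <= u -> u^6 <= 6*(2*u/175)^7.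
Proof.
  intros hu. assert (h: 6*(2/175)^7 * 10^13 >= 1) by (simpl; lra).
  replace (6*(2*u/175)^7) with ((6*(2/175)^7 * u) * u^6) by (simpl; field).
  assert (0 <= u^6) by (apply pow_le; lra).
  assert (0 < 6*(2/175)^7) by (simpl; lra).
  assert (1 <= 6*(2/175)^7 * u) by nra. nra.
Qed.

Lemma final_bound (T k : nat) eta : T = (100*k)%nat -> 10^40 <= INR T -> 0<eta<1/2 ->
  eta >= Rpower (INR T) (-(2/3)) -> /3 * (1+2*eta)^k * (1-eta/2)^(20*k) <= 2/(INR T^2).
Proof.
  intros hT hbig he hp.
  assert (hT0 : 0 < INR T) by lra.
  set (u := Rpower (INR T) (1/3)).
  assert (hu0 : 0 < u) by (unfold u, Rpower; apply exp_pos).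
  assert (hu3 : u^3 = INR T).
  { unfold u. rewrite <- Rpower_pow by (unfold Rpower; apply exp_pos). rewrite Rpower_mult.
    replace (1/3 * INR 3) with 1 by (simpl; field). apply Rpower_1; lra. }
  assert (hetaT : u <= eta * INR T).
  { unfold u. replace (1/3) with (-(2/3) + 1) by field. rewrite Rpower_plus, Rpower_1 by lra.
    apply Rmult_le_compat_r; lra. }
  assert (hk : INR T = 100 * INR k) by (rewrite hT, mult_INR; simpl; ring).
  assert (hu : 10^13 <= u).
  { destruct (Rle_lt_dec (10^13) u) as [h|h]; auto.
    assert (u^3 <= (10^13)^3) by (apply pow_incr; lra).
    assert ((10^13)^3 < 10^40) by (simpl; lra). lra. }
  assert (b1 : (1+2*eta)^k <= exp (INR k * (2*eta))).
  { rewrite <- exp_pow. apply pow_incr. pose proof (exp_ineq1_le (2*eta)); lra. }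
  assert (b2 : (1-eta/2)^(20*k) <= exp (INR (20*k) * (-(eta/2)))).
  { rewrite <- exp_pow. apply pow_incr. pose proof (exp_ineq1_le (-(eta/2))); lra. }
  assert (b3 : /3 * (1+2*eta)^k * (1-eta/2)^(20*k) <= /3 * exp (- (2*u/25))).
  { rewrite Rmult_assoc. apply Rmult_le_compat_l; [lra|].
    eapply Rle_trans. apply Rmult_le_compat; try (apply pow_le; lra); eassumption.
    rewrite <- exp_plus. apply exp_le. rewrite mult_INR. simpl (INR 20). 
    assert (INR k * eta >= u / 100) by nra. nra. }
  eapply Rle_trans; [exact b3|].
  rewrite <- hu3, <- pow_mult. simpl (3*2)%nat.
  assert (e7 : exp (2*u/25) = exp (2*u/175) ^ 7) by (rewrite exp_pow; f_equal; simpl; field).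
  assert (g7 : (2*u/175)^7 <= exp (2*u/175)^7).
  { apply pow_incr. pose proof (exp_ineq1_le (2*u/175)). split; lra. }
  pose proof (num u hu) as hn.
  assert (p6 : 0 < u^6) by (apply pow_lt; lra).
  rewrite exp_Ropp. rewrite e7.
  assert (0 < exp (2 * u / 175) ^ 7) by (apply pow_lt, exp_pos).
  apply (Rmult_le_reg_r (exp (2 * u / 175) ^ 7 * u^6)). nra.
  field_simplify; try lra. pose proof (exp_pos (2*u/175)); lra.
Qed.

Lemma lower_gen eta gamma loss (L : nat -> (nat -> R) -> R) f N :
  (forall p, SS p -> L N p <= f p) ->
  (forall t p, (t < N)%nat -> SS p ->
     SS (wsu_update 2 eta gamma loss t p 0) /\ SS (wsu_update 2 eta gamma loss t p 1) /\
     0 <= tilde_pi 2 gamma p 0 /\ 0 <= tilde_pi 2 gamma p 1 /\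
     L t p <= tilde_pi 2 gamma p 0 * L (S t) (wsu_update 2 eta gamma loss t p 0)
            + tilde_pi 2 gamma p 1 * L (S t) (wsu_update 2 eta gamma loss t p 1)) ->
  forall n t p, SS p -> (t + n = N)%nat ->
  L t p <= wsu_expect 2 eta gamma loss n t p f.
Proof.
  intros Hf Hs n; induction n as [|n IH]; intros t p Hp Ht.
  - simpl. replace t with N by lia. auto.
  - simpl wsu_expect. rewrite fsum2.
    destruct (Hs t p ltac:(lia) Hp) as (H0 & H1 & a0 & a1 & Hl).
    eapply Rle_trans; [exact Hl|].
    apply Rplus_le_compat; apply Rmult_le_compat_l; auto; apply IH; auto; lia.
Qed.

Theorem mainTheorem17 (eta gamma : nat -> R) :
  (forall T : nat, (0 < T)%nat -> (T mod 100 = 0)%nat ->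
     valid 2 (eta T) (gamma T) /\ nontrivial T (eta T) (gamma T)) ->
  exists T0 : nat, forall T : nat, (T0 <= T)%nat -> (0 < T)%nat -> (T mod 100 = 0)%nat ->
    wsu_prob 2 (eta T) (gamma T) (two_phase T) (T / 100 + 2 * T / 10)
      arm1_quarter arm1_quarter_dec
    >= 1 - 2 / (INR T ^ 2).
Proof.
  intros H. exists (10^40)%nat. intros T hT0 hpos hmod.
  destruct (H T hpos hmod) as [[He [Hg Heg]] [hn1 hn2]].
  set (e := eta T) in *. set (g := gamma T) in *.
  set (k := (T / 100)%nat).
  assert (hTk : T = (100 * k)%nat) by (pose proof (Nat.div_mod_eq T 100); unfold k; lia).
  assert (e2 : (2 * T / 10 = 20 * k)%nat).
  { rewrite hTk. replace (2 * (100 * k))%nat with (20 * k * 10)%nat by lia. apply Nat.div_mul; lia. }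
  assert (hbig : 10^40 <= INR T).
  { apply le_INR in hT0. rewrite pow_INR in hT0. replace (INR 10) with 10 in hT0 by (simpl; lra). exact hT0. }
  unfold wsu_prob. fold k. rewrite e2.
  set (N := (k + 20 * k + 1)%nat).
  set (C := fun t : nat => /3 * (1 + 2*e)^(k + 1 - t) * (1 - e/2)^(N - t - (k + 1 - t))).
  assert (Cpos : forall t, 0 <= C t).
  { intros t. unfold C. apply Rmult_le_pos; [apply Rmult_le_pos|]; try (apply pow_le); lra. }
  assert (hfin := final_bound T k e hTk hbig He hn1).
  apply Rle_ge. eapply Rle_trans.
  2: apply (lower_gen e g (two_phase T) (fun t p => 1 - C t * rr p) _ N).
  - replace (C 1%nat) with (/3 * (1+2*e)^k * (1-e/2)^(20*k)).
    2: { unfold C. f_equal; [f_equal|]; f_equal; unfold N; lia. }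
    unfold rr, uniform. replace (1 / INR 2 / (1 / INR 2)) with 1 by (simpl; field). lra.
  - intros p [h0 [h1 hs]]. replace (C N) with (/3).
    2: { unfold C. replace (k + 1 - N)%nat with 0%nat by (unfold N; lia).
         replace (N - N - 0)%nat with 0%nat by lia. simpl; ring. }
    unfold indic, arm1_quarter_dec, rr. destruct (Rle_dec (1/4) (p 0%nat)) as [hq|hq].
    + assert (0 <= p 1%nat / p 0%nat) by (apply Rlt_le, Rdiv_lt_0_compat; lra). lra.
    + assert (p 1%nat / p 0%nat * p 0%nat = p 1%nat) by (field; lra). nra.
  - intros t p ht Hp.
    destruct (hyp_facts e g p He Hg Heg Hp) as (ha & hb & hab & _).
    assert (Hstep : forall F, 0 <= F -> C t = F * C (S t) ->
      SS (wsu_update 2 e g (two_phase T) t p 0) /\ SS (wsu_update 2 e g (two_phase T) t p 1) /\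
      0 <= tilde_pi 2 g p 0 /\ 0 <= tilde_pi 2 g p 1 /\
      tilde_pi 2 g p 0 * rr (wsu_update 2 e g (two_phase T) t p 0)
      + tilde_pi 2 g p 1 * rr (wsu_update 2 e g (two_phase T) t p 1) <= F * rr p ->
      SS (wsu_update 2 e g (two_phase T) t p 0) /\ SS (wsu_update 2 e g (two_phase T) t p 1) /\
      0 <= tilde_pi 2 g p 0 /\ 0 <= tilde_pi 2 g p 1 /\
      1 - C t * rr p <= tilde_pi 2 g p 0 * (1 - C (S t) * rr (wsu_update 2 e g (two_phase T) t p 0))
        + tilde_pi 2 g p 1 * (1 - C (S t) * rr (wsu_update 2 e g (two_phase T) t p 1))).
    { intros F hF hC (s0 & s1 & t0 & t1 & hi). split; [|split; [|split; [|split]]]; auto.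
      rewrite hC. pose proof (Cpos (S t)).
      assert (C (S t) * (tilde_pi 2 g p 0 * rr (wsu_update 2 e g (two_phase T) t p 0)
      + tilde_pi 2 g p 1 * rr (wsu_update 2 e g (two_phase T) t p 1)) <= C (S t) * (F * rr p))
        by (apply Rmult_le_compat_l; auto).
      nra. }
    destruct (Nat.le_gt_cases t k) as [hle|hgt].
    + assert (l0 : two_phase T t 0 = 1) by (unfold two_phase; fold k; rewrite (proj2 (Nat.leb_le t k) hle); reflexivity).
      assert (l1 : two_phase T t 1 = 0) by (unfold two_phase; fold k; rewrite (proj2 (Nat.leb_le t k) hle); reflexivity).
      apply (Hstep (1 + 2*e)); [lra| |apply stepA; auto].
      unfold C. replace (k + 1 - t)%nat with (S (k + 1 - S t)) by lia.
      replace (N - t - S (k + 1 - S t))%nat with (N - S t - (k + 1 - S t))%nat by (unfold N; lia).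
      simpl pow. ring.
    + assert (l0 : two_phase T t 0 = 0) by (unfold two_phase; fold k; rewrite (proj2 (Nat.leb_gt t k) hgt); reflexivity).
      assert (l1 : two_phase T t 1 = 1) by (unfold two_phase; fold k; rewrite (proj2 (Nat.leb_gt t k) hgt); reflexivity).
      apply (Hstep (1 - e/2)); [lra| |apply stepB; auto].
      unfold C. replace (k + 1 - t)%nat with 0%nat by lia. replace (k + 1 - S t)%nat with 0%nat by lia.
      replace (N - t - 0)%nat with (S (N - S t - 0)) by lia.
      simpl pow. ring.
  - unfold SS, uniform. simpl INR. repeat split; lra.
  - unfold N; lia.
Qed.
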